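(* There exist a set $A\subseteq\mathcal B$ and a functional $F\colon A\to\mathcal B$ such that $F$ is $A$-restricted polynomial-time computable but $F$ has no total polynomial-time computable extension $\tilde F\colon\mathcal B\to\mathcal B$.
   Context: $\Sigma=\{0,1\}$, $\mathcal B=(\Sigma^* )^{\Sigma^*}$ is the set of total string functions. An oracle Turing machine $M^?$ with oracle $\varphi\in\mathcal B$ replaces, upon entering its query state, the query-tape content $\mathbf b$ by $\varphi(\mathbf b)$ in one time step; $\operatorname{time}_{M^\varphi}(\mathbf a)$ is the number of steps on input $\mathbf a$. $M^?$ computes $F\colon A\to\mathcal B$ if $M^\varphi=F(\varphi)$ for all $\varphi\in A$. The size function is $|\varphi|(n)=\max\{|\varphi(\mathbf a)|:|\mathbf a|\le n\}$. Second-order polynomials are the smallest class of functions $\mathbb N^{\mathbb N}\times\mathbb N\to\mathbb N$ containing all $(l,n)\mapsto p(n)$ for polynomials $p$ with natural coefficients and closed under pointwise sum, pointwise product, and $P\mapsto P^+$, $P^+(l,n)=l(P(l,n))$. For $A\subseteq\mathcal B$, $F\colon A\to\mathcal B$ is $A$-restricted polynomial-time computable if some oracle Turing machine $M^?$ computes $F$ and there is a second-order polynomial $P$ with $\operatorname{time}_{M^\varphi}(\mathbf a)\le P(|\varphi|,|\mathbf a|)$ for all $\varphi\in A$ and $\mathbf a\in\Sigma^*$. A total functional is polynomial-time computable if this holds with $A=\mathcal B$. *)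

(* Defs.v *)
From mathcomp Require Import all_boot.
Set Implicit Arguments. Unset Strict Implicit. Unset Printing Implicit Defensive.

(* Sigma = {0,1} is bool; strings are seq bool; B = total string functions. *)
Definition str := seq bool.
Definition Bfun := str -> str.

Definition sizefun (phi : Bfun) (n : nat) : nat :=
  \max_(k < n.+1) \max_(t : k.-tuple bool) size (phi (val t)).

Inductive sopoly : Type :=
  | SPpoly of seq nat
  | SPadd of sopoly & sopoly
  | SPmul of sopoly & sopoly
  | SPlift of sopoly.

Fixpoint sop_eval (P : sopoly) (l : nat -> nat) (n : nat) : nat :=
  match P with
  | SPpoly cs => \sum_(i < size cs) nth 0 cs i * n ^ i
  | SPadd P Q => sop_eval P l n + sop_eval Q l n
  | SPmul P Q => sop_eval P l n * sop_eval Q l n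
  | SPlift P => l (sop_eval P l n)
  end.

(* Tape symbols: None = blank, Some b = the bit b.  Tapes are one-sided,
   represented by the finite list of their first cells (cells beyond are blank).
   The machine has k.+3 tapes: tape 0 = input tape, tape 1 = query tape,
   tape 2 = output tape, the others are work tapes. *)
Inductive move := MoveL | MoveR | Stay.

Record OTM := mkOTM {
  otm_k : nat;                 (* number of additional work tapes *)
  otm_q : nat;
  otm_start : 'I_otm_q;
  otm_halt : 'I_otm_q;
  otm_query : 'I_otm_q;
  otm_answer : 'I_otm_q;
  otm_delta : 'I_otm_q -> {ffun 'I_(otm_k.+3) -> option bool} ->
              'I_otm_q * ('I_(otm_k.+3) -> option bool) * ('I_(otm_k.+3) -> move)
}.

Definition in_tape (k : nat) : 'I_k.+3 := inord 0.
Definition query_tape (k : nat) : 'I_k.+3 := inord 1.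
Definition out_tape (k : nat) : 'I_k.+3 := inord 2.

Record config (M : OTM) := mkConfig {
  cf_state : 'I_(otm_q M);
  cf_tapes : 'I_((otm_k M).+3) -> seq (option bool);
  cf_heads : 'I_((otm_k M).+3) -> nat
}.

Fixpoint tape_word (t : seq (option bool)) : str :=
  match t with
  | Some b :: t' => b :: tape_word t'
  | _ => [::]
  end.

Definition do_move (m : move) (h : nat) : nat :=
  match m with MoveL => h.-1 | MoveR => h.+1 | Stay => h end.

Definition init_config (M : OTM) (a : str) : config M :=
  @mkConfig M (otm_start M)
    (fun i => if i == in_tape (otm_k M) then map Some a else [::])
    (fun _ => 0).

Definition step (M : OTM) (phi : Bfun) (c : config M) : config M :=
  if cf_state c == otm_halt M then c
  else if cf_state c == otm_query M then
    let qt := query_tape (otm_k M) in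
    @mkConfig M (otm_answer M)
      (fun i => if i == qt then map Some (phi (tape_word (cf_tapes c qt)))
                else cf_tapes c i)
      (fun i => if i == qt then 0 else cf_heads c i)
  else
    let: (q', w, m) :=
      otm_delta (cf_state c) [ffun i => nth None (cf_tapes c i) (cf_heads c i)] in
    @mkConfig M q'
      (fun i => set_nth None (cf_tapes c i) (cf_heads c i) (w i))
      (fun i => do_move (m i) (cf_heads c i)).

Definition run (M : OTM) (phi : Bfun) (a : str) (t : nat) : config M :=
  iter t (step phi) (init_config M a).

Definition halted (M : OTM) (c : config M) : Prop := cf_state c = otm_halt M.

Definition output (M : OTM) (c : config M) : str :=
  tape_word (cf_tapes c (out_tape (otm_k M))).

Definition otm_outputs (M : OTM) (phi : Bfun) (a y : str) : Prop :=
  exists t, halted (run M phi a t) /\ output (run M phi a t) = y.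

Definition time_le (M : OTM) (phi : Bfun) (a : str) (T : nat) : Prop :=
  exists2 t, t <= T & halted (run M phi a t).

Definition computes (A : Bfun -> Prop) (M : OTM) (F : {phi : Bfun | A phi} -> Bfun)
  : Prop :=
  forall (phi : {phi : Bfun | A phi}) (a : str), otm_outputs M (proj1_sig phi) a (F phi a).

Definition restricted_polytime (A : Bfun -> Prop) (F : {phi : Bfun | A phi} -> Bfun)
  : Prop :=
  exists (M : OTM) (P : sopoly), computes M F /\
    forall phi : Bfun, A phi -> forall a : str,
      time_le M phi a (sop_eval P (sizefun phi) (size a)).

Definition polytime (F : Bfun -> Bfun) : Prop :=
  @restricted_polytime (fun _ => True) (fun phi => F (proj1_sig phi)).

(* Main.v *)
Require Import Defs.
From mathcomp Require Import all_boot.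
From mathcomp Require Import zify.

Definition qword {M : OTM} (c : config M) : str :=
  tape_word (cf_tapes c (query_tape (otm_k M))).

Lemma run_agree (M : OTM) (phi psi : Bfun) a t :
  (forall i, i < t -> phi (qword (run M phi a i)) = psi (qword (run M phi a i))) ->
  run M phi a t = run M psi a t.
Proof.
elim: t => [//|t IH] H.
rewrite /run !iterS -/(run M phi a t) -/(run M psi a t).
rewrite -IH; last by move=> i Hi; apply: H; apply: ltnW.
have := H t (ltnSn t); rewrite /qword => E.
by rewrite /step E.
Qed.

Lemma run_halted (M : OTM) phi a t d :
  halted (run M phi a t) -> run M phi a (d + t) = run M phi a t.
Proof.
move=> H; elim: d => [//|d IH].
rewrite addSn /run iterS -/(run M phi a (d + t)) IH.
by rewrite /step H eqxx.
Qed.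

Lemma halted_same (M : OTM) phi a t1 t2 :
  halted (run M phi a t1) -> halted (run M phi a t2) ->
  run M phi a t1 = run M phi a t2.
Proof.
move=> H1 H2.
wlog le12 : t1 t2 H1 H2 / t1 <= t2.
  move=> W; case: (leqP t1 t2) => h; first exact: W.
  by symmetry; apply: W => //; apply: ltnW.
by rewrite -(subnK le12) run_halted.
Qed.

Lemma tape_word_size t : size (tape_word t) <= size t.
Proof. by elim: t => [|[[]|] t IH] //=; apply: leq_trans (leqnSn _). Qed.

Lemma out_ne_in k : (out_tape k == in_tape k) = false.
Proof. by rewrite /out_tape /in_tape; apply/negbTE/eqP => /(congr1 val); rewrite /= !inordK. Qed.

Lemma out_ne_q k : (out_tape k == query_tape k) = false.
Proof. by rewrite /out_tape /query_tape; apply/negbTE/eqP => /(congr1 val); rewrite /= !inordK. Qed.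

Lemma out_bound (M : OTM) phi a t :
  size (cf_tapes (run M phi a t) (out_tape (otm_k M))) <= t /\
  cf_heads (run M phi a t) (out_tape (otm_k M)) <= t.
Proof.
elim: t => [|t [IH1 IH2]].
  by rewrite /run /= out_ne_in.
rewrite /run iterS -/(run M phi a t).
set c := run M phi a t in IH1 IH2 *.
rewrite /step.
case: ifP => _; first by split; apply: leq_trans (leqnSn _).
case: ifP => _.
  by rewrite /= (negbTE (_ : out_tape _ != query_tape _)) ?out_ne_q //; split; apply: leq_trans (leqnSn _).
case: (otm_delta _ _) => [[q' w] m] /=; split.
  by rewrite size_set_nth geq_max ltnS IH2 /=; apply: leq_trans (leqnSn _).
by case: (m _) => /=; [apply: leq_trans (leq_pred _) _; apply: leq_trans (leqnSn _)| |apply: leq_trans (leqnSn _)].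
Qed.

Lemma output_size (M : OTM) phi a t : size (output (run M phi a t)) <= t.
Proof. rewrite /output; apply: leq_trans (tape_word_size _) _; exact: (out_bound M phi a t).1. Qed.

Lemma sop_mono P (l l' : nat -> nat) n :
  (forall x, l x <= l' x) -> {homo l' : x y / x <= y} ->
  sop_eval P l n <= sop_eval P l' n.
Proof.
move=> H Hm; elim: P => [cs|P IP Q IQ|P IP Q IQ|P IP] //=.
- exact: leq_add.
- exact: leq_mul.
- exact: leq_trans (H _) (Hm _ _ IP).
Qed.

Lemma sop_const_bound P : exists B d, forall c, 0 < c ->
  sop_eval P (fun _ => c) 0 <= B * c ^ d.
Proof.
elim: P => [cs|P [B1 [d1 IP]] Q [B2 [d2 IQ]]|P [B1 [d1 IP]] Q [B2 [d2 IQ]]|P _].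
- by exists (sop_eval (SPpoly cs) (fun _ => 0) 0), 0 => c _; rewrite expn0 muln1.
- exists (B1 + B2), (d1 + d2) => c c0 /=; rewrite mulnDl.
  apply: leq_add; [apply: leq_trans (IP c c0) _|apply: leq_trans (IQ c c0) _];
  by apply: leq_mul => //; apply: leq_pexp2l => //; rewrite ?leq_addr ?leq_addl.
- exists (B1 * B2), (d1 + d2) => c c0 /=; rewrite expnD mulnACA.
  exact: leq_mul (IP c c0) (IQ c c0).
- by exists 1, 1 => c _ /=; rewrite mul1n expn1.
Qed.

Lemma sq_le_pow n : 4 <= n -> n * n <= 2 ^ n.
Proof.
elim: n => [//|n IH]; rewrite leq_eqVlt => /orP[/eqP <- //|h].
have := IH h; rewrite expnS => H.
have : n.+1 * n.+1 <= 2 * (n * n) by rewrite -ltnS in h; nia.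
move=> H2; apply: leq_trans H2 _; rewrite leq_mul2l /=; exact: H.
Qed.

Lemma poly_lt_exp B d : exists s, B * s.+1 ^ d < 2 ^ s.
Proof.
set m := d + B + 4.
exists (2 ^ m).-1.
have pos : 0 < 2 ^ m by rewrite expn_gt0.
rewrite prednK // -expnM.
have hB : B < 2 ^ B := ltn_expl B (isT : 1 < 2).
have h1 : B * 2 ^ (m * d) < 2 ^ (B + m * d) by rewrite expnD ltn_pmul2r ?expn_gt0.
apply: leq_trans h1 _.
have h2 : B + m * d < 2 ^ m.
  have := sq_le_pow m (leq_addl _ _).
  move=> H; apply: leq_trans H; rewrite /m; nia.
by rewrite leq_pexp2l // -ltnS prednK.
Qed.

Lemma sizefun_ge (phi : Bfun) x n : size x <= n -> size (phi x) <= sizefun phi n.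
Proof.
move=> H; rewrite /sizefun.
have Hx : size x < n.+1 by [].
apply: leq_trans (leq_bigmax (Ordinal Hx)); rewrite /=.
exact: (leq_bigmax (F := fun t : (size x).-tuple bool => size (phi (val t))) (in_tuple x)).
Qed.

Lemma sizefun_le (phi : Bfun) C n : (forall x, size (phi x) <= C) -> sizefun phi n <= C.
Proof.
move=> H; apply/bigmax_leqP => k _; apply/bigmax_leqP => t _; exact: H.
Qed.

Definition W s : seq str := [seq val t | t <- enum {:s.-tuple bool}].

Lemma size_W s : size (W s) = 2 ^ s.
Proof. by rewrite size_map -cardE card_tuple card_bool. Qed.

Lemma uniq_W s : uniq (W s).
Proof. rewrite map_inj_uniq ?enum_uniq //; exact: val_inj. Qed.

Lemma mem_W s w : (w \in W s) = (size w == s).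
Proof.
apply/mapP/eqP => [[t _ ->]|H]; first exact: size_tuple.
have H' : size w == s by apply/eqP.
by exists (Tuple H'); rewrite ?mem_enum.
Qed.

Lemma size_nthW s i : size (nth [::] (W s) i) <= s.
Proof.
case: (ltnP i (size (W s))) => h; last by rewrite nth_default.
by have := mem_nth [::] h; rewrite mem_W => /eqP ->.
Qed.

Definition phi0 (s : nat) (x : str) : str :=
  match x with
  | [::] => false :: nth [::] (W s) 0
  | false :: w => if w \in W s then
                    (if (index w (W s)).+1 < 2 ^ s then false :: nth [::] (W s) (index w (W s)).+1
                     else [:: true])
                  else [::]
  | _ => [::]
  end.

Lemma phi0_size s x : size (phi0 s x) <= s.+1.
Proof.
case: x => [|[] w] /=; rewrite ?ltnS ?size_nthW //.
by case: ifP => // _; case: ifP => _ //=; rewrite ltnS size_nthW.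
Qed.

Lemma phi0_chain s j : j < 2 ^ s -> iter j.+1 (phi0 s) [::] = false :: nth [::] (W s) j.
Proof.
elim: j => [//|j IH] h.
rewrite iterS IH ?(ltnW h) //= mem_nth ?size_W ?(ltnW h) //.
by rewrite index_uniq ?uniq_W ?size_W ?(ltnW h) // h.
Qed.

Lemma phi0_end s : iter (2 ^ s).+1 (phi0 s) [::] = [:: true].
Proof.
have pos : 0 < 2 ^ s by rewrite expn_gt0.
rewrite -(prednK pos) iterS phi0_chain ?prednK ?ltn_predL //= mem_nth ?size_W ?ltn_predL //.
by rewrite index_uniq ?uniq_W ?size_W ?ltn_predL // prednK // ltnn.
Qed.

Definition s0 : 'I_3 := @Ordinal 3 0 erefl.
Definition s1 : 'I_3 := @Ordinal 3 1 erefl.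
Definition s2 : 'I_3 := @Ordinal 3 2 erefl.

Lemma qtE : query_tape 0 = s1.
Proof. by apply: val_inj; rewrite /= inordK. Qed.
Lemma otE : out_tape 0 = s2.
Proof. by apply: val_inj; rewrite /= inordK. Qed.
Lemma itE : in_tape 0 = s0.
Proof. by apply: val_inj; rewrite /= inordK. Qed.

Definition delta0 (q : 'I_3) (r : {ffun 'I_3 -> option bool}) :
    'I_3 * ('I_3 -> option bool) * ('I_3 -> move) :=
  if r s1 == Some true then (s2, fun i => r i, fun _ => Stay)
  else (s0, fun i => if i == s2 then Some true else r i,
        fun i => if i == s2 then MoveR else Stay).

Definition M0 : OTM := @mkOTM 0 3 s0 s2 s0 s1 delta0.

Lemma tape_word_map y : tape_word (map Some y) = y.
Proof. by elim: y => //= b y ->. Qed.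

Lemma set_nseq_true j : set_nth None (nseq j (Some true)) j (Some true) = nseq j.+1 (Some true).
Proof. by elim: j => //= j ->. Qed.

Lemma set_nseq_none j : tape_word (set_nth None (nseq j (Some true)) j None) = nseq j true.
Proof. by elim: j => //= j ->. Qed.

Lemma set_head y : tape_word (set_nth None (map Some y) 0 (nth None (map Some y) 0)) = y.
Proof. by case: y => //= b y; rewrite tape_word_map. Qed.

Definition Pj (phi : Bfun) (j : nat) : bool := head false (iter j.+1 phi [::]).

Lemma step_q phi (c : config M0) : cf_state c = s0 ->
  step phi c = @mkConfig M0 s1
    (fun i => if i == s1 then map Some (phi (tape_word (cf_tapes c s1))) else cf_tapes c i)
    (fun i => if i == s1 then 0 else cf_heads c i).
Proof.
move=> E; rewrite /step; change (otm_k M0) with 0; rewrite qtE E.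
have -> : (s0 == otm_halt M0) = false by [].
have -> : (s0 == otm_query M0) = true by [].
reflexivity.
Qed.

Lemma step_a phi (c : config M0) : cf_state c = s1 ->
  step phi c =
    let: (q', w, m) := delta0 s1 [ffun i => nth None (cf_tapes c i) (cf_heads c i)] in
    @mkConfig M0 q'
      (fun i => set_nth None (cf_tapes c i) (cf_heads c i) (w i))
      (fun i => do_move (m i) (cf_heads c i)).
Proof.
move=> E; rewrite /step E.
have -> : (s1 == otm_halt M0) = false by [].
have -> : (s1 == otm_query M0) = false by [].
reflexivity.
Qed.

Lemma M0_inv phi a i : (forall i', i' < i -> ~~ Pj phi i') ->
  [/\ cf_state (run M0 phi a (2 * i)) = s0,
      tape_word (cf_tapes (run M0 phi a (2 * i)) s1) = iter i phi [::],
      cf_tapes (run M0 phi a (2 * i)) s2 = nseq i (Some true) &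
      cf_heads (run M0 phi a (2 * i)) s2 = i].
Proof.
elim: i => [|i IH] H.
  rewrite muln0 /run /init_config; change (otm_k M0) with 0; rewrite itE.
  split => //=.
have [E1 E2 E3 E4] := IH (fun i' h => H i' (ltnW h)).
have Hi := H i (ltnSn i).
have -> : 2 * i.+1 = (2 * i).+2 by rewrite mulnS add2n.
rewrite /run !iterS -/(run M0 phi a (2 * i)).
set c := run M0 phi a (2 * i) in E1 E2 E3 E4 *.
have F1 : cf_state (step phi c) = s1 by rewrite step_q.
have F2 : cf_tapes (step phi c) s1 = map Some (iter i.+1 phi [::]) by rewrite step_q //= E2.
have F3 : cf_heads (step phi c) s1 = 0 by rewrite step_q.
have F4 : cf_tapes (step phi c) s2 = nseq i (Some true) by rewrite step_q.
have F5 : cf_heads (step phi c) s2 = i by rewrite step_q.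
set c1 := step phi c in F1 F2 F3 F4 F5 *.
rewrite step_a // /delta0 ffunE F2 F3.
move: Hi F2; rewrite /Pj iterS; move: (phi (iter i phi [::])) => y.
case: y => [|[] y] //= _ F2; rewrite ?ffunE F2 F3 F4 F5 ?set_nseq_true //=.
by rewrite tape_word_map.
Qed.

Lemma M0_halt phi a j : Pj phi j -> (forall i, i < j -> ~~ Pj phi i) ->
  halted (run M0 phi a (2 * j).+2) /\ output (run M0 phi a (2 * j).+2) = nseq j true.
Proof.
move=> Hj Hlt.
have [E1 E2 E3 E4] := M0_inv phi a j Hlt.
rewrite /halted /output; change (otm_k M0) with 0; rewrite otE.
rewrite /run !iterS -/(run M0 phi a (2 * j)).
set c := run M0 phi a (2 * j) in E1 E2 E3 E4 *.
have F1 : cf_state (step phi c) = s1 by rewrite step_q.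
have F2 : cf_tapes (step phi c) s1 = map Some (phi (iter j phi [::])) by rewrite step_q //= E2.
have F3 : cf_heads (step phi c) s1 = 0 by rewrite step_q.
have F4 : cf_tapes (step phi c) s2 = nseq j (Some true) by rewrite step_q.
have F5 : cf_heads (step phi c) s2 = j by rewrite step_q.
set c1 := step phi c in F1 F2 F3 F4 F5 *.
rewrite step_a // /delta0 ffunE F2 F3.
move: Hj F2; rewrite /Pj iterS; move: (phi (iter j phi [::])) => y.
case: y => [|[] y] //= _ F2; rewrite ?ffunE F4 F5; split => //.
by rewrite nth_default ?size_nseq // set_nseq_none.
Qed.

Definition Aset (phi : Bfun) : Prop :=
  exists j, [/\ Pj phi j, (forall i, i < j -> ~~ Pj phi i) &
                (2 * j).+2 <= sizefun phi (sizefun phi 0)].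

Lemma A_ex {phi} : Aset phi -> exists j, Pj phi j.
Proof. by case=> j [H _ _]; exists j. Qed.

Definition Ffun (x : {phi : Bfun | Aset phi}) : Bfun :=
  fun _ => nseq (ex_minn (A_ex (proj2_sig x))) true.

Lemma minE {phi} (H : Aset phi) j : Pj phi j -> (forall i, i < j -> ~~ Pj phi i) ->
  ex_minn (A_ex H) = j.
Proof.
move=> Hj Hlt; case: ex_minnP => m Pm Hm.
apply/eqP; rewrite eqn_leq Hm //= leqNgt; apply/negP => lt.
by have := Hlt m lt; rewrite Pm.
Qed.

Lemma restricted_part : restricted_polytime Ffun.
Proof.
exists M0, (SPlift (SPlift (SPpoly [::]))); split.
  case=> phi H a; have H' := H; case: H' => j [Hj Hlt Hb].
  have [h1 h2] := M0_halt phi a j Hj Hlt.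
  exists (2 * j).+2; split => //.
  by rewrite h2 /Ffun /= (minE H j Hj Hlt).
move=> phi [j [Hj Hlt Hb]] a.
exists (2 * j).+2; last exact: (M0_halt phi a j Hj Hlt).1.
by rewrite /= big_ord0.
Qed.

Lemma head_chain s i : i <= 2 ^ s -> head false (iter i (phi0 s) [::]) = false.
Proof.
case: i => [//|i] h; by rewrite phi0_chain.
Qed.

Lemma size_phi0_nil s : size (phi0 s [::]) = s.+1.
Proof.
rewrite /=; congr S.
have h : 0 < size (W s) by rewrite size_W expn_gt0.
by have := mem_nth [::] h; rewrite mem_W => /eqP.
Qed.

Theorem mainTheorem6 :
  exists (A : Bfun -> Prop) (F : {phi : Bfun | A phi} -> Bfun),
    restricted_polytime F /\
    ~ (exists Ft : Bfun -> Bfun,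
          polytime Ft /\ forall (phi : Bfun) (h : A phi), Ft phi = F (exist _ phi h)).
Proof.
exists Aset, Ffun; split; first exact: restricted_part.
move=> [Ft [[M [P [Hcomp Htime]]] Hext]].
have [B [d HB]] := sop_const_bound P.
have [s Hs] := poly_lt_exp B d.
pose phi' := phi0 s.
pose T := sop_eval P (sizefun phi') (size ([::] : str)).
have HT : T < 2 ^ s.
  apply: leq_ltn_trans Hs.
  apply: leq_trans (HB _ (ltn0Sn s)).
  apply: sop_mono => //; move=> x; exact: sizefun_le (phi0_size s).
have [t' t'T Ht'] := Htime phi' I [::].
pose Q := [seq qword (run M phi' [::] i) | i <- iota 0 T].
pose Cd := [seq true :: w | w <- W s].
have uCd : uniq Cd by rewrite map_inj_uniq ?uniq_W // => x y [].
have sCd : size Cd = 2 ^ s by rewrite size_map size_W.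
case: (boolP (all (mem Q) Cd)) => [Hall|].
  have := uniq_leq_size uCd (fun x hx => (allP Hall) x hx).
  by rewrite sCd size_map size_iota leqNgt HT.
move/allPn => [h hC hQ].
pose BIG := (2 * 2 ^ s).+2.
pose phih := fun x => if x == h then nseq BIG true else phi' x.
have hhead : head false h = true by move: hC => /mapP [w _ ->].
have hsize : size h = s.+1 by move: hC => /mapP [w /[!mem_W] /eqP <- ->].
have iterE : forall i, i <= (2 ^ s).+1 -> iter i phih [::] = iter i phi' [::].
  elim=> [//|i IH] hi; rewrite !iterS IH ?(ltnW hi) // /phih.
  case: eqP => // E.
  by have := head_chain s i hi; rewrite E hhead.
have HPj : Pj phih (2 ^ s) by rewrite /Pj iterE // phi0_end.
have HPlt : forall i, i < 2 ^ s -> ~~ Pj phih i.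
  move=> i hi; rewrite /Pj iterE ?ltnS 1?ltnW //.
  by rewrite head_chain.
have HA : Aset phih.
  exists (2 ^ s); split => //.
  have h0 : size h <= sizefun phih 0.
    rewrite hsize -(size_phi0_nil s).
    have -> : phi0 s [::] = phih [::] by rewrite /phih; case: eqP => // E; move: hhead; rewrite -E.
    exact: sizefun_ge.
  have := sizefun_ge phih h _ h0; rewrite /phih eqxx size_nseq; exact.
have HF : Ft phih = fun _ => nseq (2 ^ s) true.
  by rewrite (Hext phih HA) /Ffun /= (minE HA _ HPj HPlt).
have [t [Ht Hout]] := Hcomp (exist _ phih I) [::].
rewrite /= HF in Hout.
have Hag : run M phi' [::] t' = run M phih [::] t'.
  apply: run_agree => i hi.
  rewrite /phih; case: eqP => // E.
  exfalso; move/negP: hQ; apply; rewrite -E; apply/mapP; exists i => //.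
  by rewrite mem_iota add0n (leq_trans hi t'T).
have Ht'' : halted (run M phih [::] t') by rewrite -Hag.
have := output_size M phih [::] t'.
rewrite (halted_same M phih [::] t' t Ht'' Ht) Hout size_nseq => H2.
by have := leq_ltn_trans (leq_trans H2 t'T) HT; rewrite ltnn.
Qed.
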